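(* For every maximal consistent set $X$ (relative to the axiom system of $\mathbb{PCL}$), the relation $\le_X$ on formulas, defined by $A\le_X B$ iff $(A\lor B)>A\in X$, is reflexive and transitive.
   Context: Formulas $\mathcal{L}::=p\mid\bot\mid A\wedge B\mid A\lor B\mid A\to B\mid A>B$. The axiom system of $\mathbb{PCL}$: classical propositional logic, rules (RCEA) from $A\leftrightarrow B$ infer $(A>C)\leftrightarrow(B>C)$, (RCK) from $A\to B$ infer $(C>A)\to(C>B)$, axioms (ID) $A>A$, (R-And) $(A>B)\wedge(A>C)\to(A>(B\wedge C))$, (CM) $(A>B)\wedge(A>C)\to((A\wedge B)>C)$, (OR) $(A>C)\wedge(B>C)\to((A\lor B)>C)$. Maximal consistent sets are the usual ones relative to this axiom system. *)

(* Defs.v *)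
From Stdlib Require Import List.
Import ListNotations.

Inductive form : Type :=
| Var : nat -> form
| Bot : form
| And : form -> form -> form
| Or  : form -> form -> form
| Imp : form -> form -> form
| Cond : form -> form -> form.

Definition Iff (A B : form) : form := And (Imp A B) (Imp B A).

(* Classical truth-functional evaluation: variables and conditional formulas
   A > B are treated as propositional atoms, valued by [v]. *)
Fixpoint teval (v : form -> bool) (A : form) : bool :=
  match A with
  | Var n => v (Var n)
  | Bot => false
  | And B C => andb (teval v B) (teval v C)
  | Or B C => orb (teval v B) (teval v C)
  | Imp B C => orb (negb (teval v B)) (teval v C)
  | Cond B C => v (Cond B C)
  end.

Definition tautology (A : form) : Prop := forall v, teval v A = true.

Inductive PCL : form -> Prop :=
| pcl_taut : forall A, tautology A -> PCL A
| pcl_mp : forall A B, PCL (Imp A B) -> PCL A -> PCL B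
| pcl_RCEA : forall A B C, PCL (Iff A B) -> PCL (Iff (Cond A C) (Cond B C))
| pcl_RCK : forall A B C, PCL (Imp A B) -> PCL (Imp (Cond C A) (Cond C B))
| pcl_ID : forall A, PCL (Cond A A)
| pcl_RAnd : forall A B C,
    PCL (Imp (And (Cond A B) (Cond A C)) (Cond A (And B C)))
| pcl_CM : forall A B C,
    PCL (Imp (And (Cond A B) (Cond A C)) (Cond (And A B) C))
| pcl_OR : forall A B C,
    PCL (Imp (And (Cond A C) (Cond B C)) (Cond (Or A B) C)).

Definition Top : form := Imp Bot Bot.

Fixpoint conj_list (l : list form) : form :=
  match l with
  | [] => Top
  | A :: l' => And A (conj_list l')
  end.

Definition derives (X : form -> Prop) (A : form) : Prop :=
  exists l : list form, (forall B, In B l -> X B) /\ PCL (Imp (conj_list l) A).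

Definition consistent (X : form -> Prop) : Prop := ~ derives X Bot.

Definition maximal_consistent (X : form -> Prop) : Prop :=
  consistent X /\
  forall Y : form -> Prop, (forall A, X A -> Y A) -> consistent Y ->
    forall A, Y A -> X A.

Definition leX (X : form -> Prop) (A B : form) : Prop := X (Cond (Or A B) A).

(* Main.v *)
Require Import Defs.
From Stdlib Require Import List.
Import ListNotations.

Ltac taut := apply pcl_taut; intro v; simpl;
  repeat match goal with
  | |- context [teval ?w ?x] => destruct (teval w x)
  | |- context [?w (Cond ?a ?b)] => destruct (w (Cond a b))
  end; reflexivity.

Lemma mp2 A B C : PCL (Imp A (Imp B C)) -> PCL A -> PCL B -> PCL C.
Proof. intros H1 H2 H3. exact (pcl_mp _ _ (pcl_mp _ _ H1 H2) H3). Qed.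

Lemma conj_app l1 l2 :
  PCL (Imp (conj_list (l1 ++ l2)) (And (conj_list l1) (conj_list l2))).
Proof.
  induction l1 as [|a l1 IH]; simpl.
  - taut.
  - eapply pcl_mp; [|exact IH].
    set (x := conj_list (l1 ++ l2)). set (y := conj_list l1). set (z := conj_list l2).
    taut.
Qed.

Lemma lift X A : derives X A ->
  forall l, (forall B, In B l -> X B \/ B = A) ->
  exists l', (forall B, In B l' -> X B) /\ PCL (Imp (conj_list l') (conj_list l)).
Proof.
  intros [l0 [H0 P0]] l. induction l as [|b l IH]; intros Hl.
  - exists []. split; [intros B []|]. simpl. taut.
  - destruct IH as [l' [H' P']]. { intros B HB. apply Hl. right; exact HB. }
    destruct (Hl b (or_introl eq_refl)) as [Hb|Hb].
    + exists (b :: l'). split.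
      * intros B [<-|HB]; auto.
      * simpl. eapply pcl_mp; [|exact P'].
        set (x := conj_list l'). set (y := conj_list l). taut.
    + subst b. exists (l0 ++ l'). split.
      * intros B HB. apply in_app_or in HB as [HB|HB]; auto.
      * simpl. eapply pcl_mp; [|exact (conj_app l0 l')].
        eapply mp2; [|exact P0|exact P'].
        set (x := conj_list (l0 ++ l')). set (y := conj_list l').
        set (z := conj_list l). set (w := conj_list l0). taut.
Qed.

Lemma closed X A : maximal_consistent X -> derives X A -> X A.
Proof.
  intros [Hc Hm] HA.
  apply (Hm (fun B => X B \/ B = A)); auto.
  intros [l [Hl Pl]].
  destruct (lift X A HA l Hl) as [l' [H' P']].
  apply Hc. exists l'. split; auto.
  eapply mp2; [|exact P'|exact Pl].
  set (x := conj_list l'). set (y := conj_list l). taut.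
Qed.

Section S.
Variable X : form -> Prop.
Hypothesis HX : maximal_consistent X.

Lemma X_thm A : PCL A -> X A.
Proof. intros H. apply closed; auto. exists []. split; [intros B []|].
  eapply pcl_mp; [|exact H]. simpl. taut. Qed.

Lemma X_mp A B : X (Imp A B) -> X A -> X B.
Proof. intros H1 H2. apply closed; auto. exists [Imp A B; A]. split.
  - intros D [<-|[<-|[]]]; auto.
  - simpl. taut. Qed.

Lemma X_and A B : X A -> X B -> X (And A B).
Proof. intros H1 H2. apply closed; auto. exists [A; B]. split.
  - intros D [<-|[<-|[]]]; auto.
  - simpl. taut. Qed.

Lemma X_rcea A B C : PCL (Iff A B) -> X (Cond A C) -> X (Cond B C).
Proof. intros H1 H2. eapply X_mp; [|exact H2]. apply X_thm.
  eapply pcl_mp; [|exact (pcl_RCEA _ _ C H1)]. taut. Qed.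

Lemma X_rck A B C : PCL (Imp A B) -> X (Cond C A) -> X (Cond C B).
Proof. intros H1 H2. eapply X_mp; [|exact H2]. apply X_thm. apply pcl_RCK; auto. Qed.

Lemma X_or A B C : X (Cond A C) -> X (Cond B C) -> X (Cond (Or A B) C).
Proof. intros. eapply X_mp; [apply X_thm, pcl_OR|]. apply X_and; auto. Qed.

Lemma X_rand A B C : X (Cond A B) -> X (Cond A C) -> X (Cond A (And B C)).
Proof. intros. eapply X_mp; [apply X_thm, pcl_RAnd|]. apply X_and; auto. Qed.

Lemma X_cm A B C : X (Cond A B) -> X (Cond A C) -> X (Cond (And A B) C).
Proof. intros. eapply X_mp; [apply X_thm, pcl_CM|]. apply X_and; auto. Qed.

End S.

Theorem mainTheorem5 :
  forall X : form -> Prop, maximal_consistent X ->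
    (forall A, leX X A A) /\
    (forall A B C, leX X A B -> leX X B C -> leX X A C).
Proof.
  intros X HX. split.
  - intros A. unfold leX. apply (X_rcea X HX A); [taut|]. apply X_thm; auto. apply pcl_ID.
  - intros A B C H1 H2. unfold leX in *.
    set (D := Or (Or A B) (Or B C)). set (E := Or A B).
    assert (S1 : X (Cond D E)).
    { apply X_or; auto.
      - apply (X_rck X HX A); [taut|exact H1].
      - apply (X_rck X HX B); [taut|exact H2]. }
    assert (S2 : X (Cond D A)).
    { assert (T1 : X (Cond (And D E) A)) by (apply (X_rcea X HX E); [unfold D, E; taut|exact H1]).
      assert (T2 : X (Cond (And D E) (Imp E A))) by (apply (X_rck X HX A); [taut|exact T1]).
      set (N := And D (Imp E Bot)).
      assert (T3 : X (Cond N (Imp E A))).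
      { apply (X_rck X HX N); [unfold N; taut|]. apply X_thm; auto. apply pcl_ID. }
      assert (T4 : X (Cond D (Imp E A))).
      { apply (X_rcea X HX (Or (And D E) N)); [unfold N; taut|]. apply X_or; auto. }
      apply (X_rck X HX (And E (Imp E A))); [taut|]. apply X_rand; auto. }
    assert (S3 : X (Cond D (Or A C))) by (apply (X_rck X HX A); [taut|exact S2]).
    apply (X_rcea X HX (And D (Or A C))); [unfold D; taut|]. apply X_cm; auto.
Qed.
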